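(* Weak-head reduction $\to_{wh}$ on $\mathtt T_J$ is deterministic: if $t\to_{wh} t_1$ and $t\to_{wh} t_2$ then $t_1=t_2$.
   Context: Terms $\mathtt T_J$: $t,u,r ::= x \mid \lambda x.t \mid t(u,y.r)$ ($y$ bound in $r$), up to $\alpha$-equivalence; $\{u/x\}t$ is capture-avoiding substitution. Neutral terms $\mathtt n ::= x \mid \mathtt n(u,y.\mathtt n)$; neutral list contexts $\mathtt D_n ::= \Diamond \mid \mathtt n(u,y.\mathtt D_n)$; weak-head contexts $\mathtt W ::= \Diamond \mid \mathtt W(u,y.r) \mid \mathtt n(u,y.\mathtt W)$ (here $u,r$ arbitrary terms). Weak-head reduction: $\mathtt W\langle \mathtt D_n\langle\lambda x.s\rangle(u,y.r)\rangle \to_{wh} \mathtt W\langle \{\{u/x\}\mathtt D_n\langle s\rangle/y\}r\rangle$ (by $\alpha$-conversion, variables bound by $\mathtt D_n$ not free in $u$, and $x$ not occurring in $\mathtt D_n$). *)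

(* Defs.v *)
(* Terms of T_J up to alpha-equivalence, represented with
   de Bruijn indices. *)
From Stdlib Require Import Arith.

(* t, u, r ::= x | \x.t | t(u, y.r)   (y bound in r) *)
Inductive term : Type :=
| Var : nat -> term
| Lam : term -> term
| App : term -> term -> term -> term.  (* App t u r : r binds index 0 (= y) *)

Fixpoint shift (d c : nat) (t : term) : term :=
  match t with
  | Var n => if Nat.leb c n then Var (n + d) else Var n
  | Lam b => Lam (shift d (S c) b)
  | App t1 u r => App (shift d c t1) (shift d c u) (shift d (S c) r)
  end.

Fixpoint subst (k : nat) (u : term) (t : term) : term :=
  match t with
  | Var n => if Nat.ltb n k then Var n
             else if Nat.eqb n k then shift k 0 u
             else Var (pred n)
  | Lam b => Lam (subst (S k) u b)
  | App t1 u' r => App (subst k u t1) (subst k u u') (subst (S k) u r)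
  end.

(* {u/x} t where x is the variable bound by the outermost removed binder *)
Definition subst0 (u t : term) : term := subst 0 u t.

Inductive neutral : term -> Prop :=
| neutral_var : forall x, neutral (Var x)
| neutral_app : forall n u n', neutral n -> neutral n' -> neutral (App n u n').

Inductive Dctx : Type :=
| DHole : Dctx
| DApp : term -> term -> Dctx -> Dctx.

Fixpoint Dvalid (D : Dctx) : Prop :=
  match D with
  | DHole => True
  | DApp n _ D' => neutral n /\ Dvalid D'
  end.

Fixpoint plugD (D : Dctx) (t : term) : term :=
  match D with
  | DHole => t
  | DApp n u D' => App n u (plugD D' t)
  end.

(* number of binders of D crossed to reach the hole *)
Fixpoint depthD (D : Dctx) : nat :=
  match D with
  | DHole => 0
  | DApp _ _ D' => S (depthD D')
  end.

Inductive Wctx : Type :=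
| WHole : Wctx
| WLeft : Wctx -> term -> term -> Wctx
| WRight : term -> term -> Wctx -> Wctx.

Fixpoint Wvalid (W : Wctx) : Prop :=
  match W with
  | WHole => True
  | WLeft W' _ _ => Wvalid W'
  | WRight n _ W' => neutral n /\ Wvalid W'
  end.

Fixpoint plugW (W : Wctx) (t : term) : term :=
  match W with
  | WHole => t
  | WLeft W' u r => App (plugW W' t) u r
  | WRight n u W' => App n u (plugW W' t)
  end.

(* W<D<\x.s>(u,y.r)>  ->wh  W<{ {u/x} D<s> / y } r>.
   In de Bruijn form, s sits under the binders of D and then the lambda;
   {u/x} D<s> is D<s[0 := u shifted past the binders of D]>. *)
Definition wh_step (t t' : term) : Prop :=
  exists (W : Wctx) (D : Dctx) (s u r : term),
    Wvalid W /\ Dvalid D /\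
    t = plugW W (App (plugD D (Lam s)) u r) /\
    t' = plugW W (subst0 (plugD D (subst0 (shift (depthD D) 0 u) s)) r).

(* Main.v *)
Require Import Defs.

Definition redex (t : term) : Prop :=
  exists D s u r, Dvalid D /\ t = App (plugD D (Lam s)) u r.

Lemma plugD_not_neutral : forall D s, ~ neutral (plugD D (Lam s)).
Proof.
  induction D; simpl; intros s H; inversion H; subst; eauto.
  eapply IHD; eauto.
Qed.

Lemma redex_not_neutral : forall t, redex t -> ~ neutral t.
Proof.
  intros t [D [s [u [r [HD ->]]]]] H. inversion H; subst.
  eapply plugD_not_neutral; eauto.
Qed.

Lemma plugW_not_neutral : forall W R, Wvalid W -> redex R -> ~ neutral (plugW W R).
Proof.
  induction W; simpl; intros R HW HR H.
  - eapply redex_not_neutral; eauto.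
  - inversion H; subst. eapply IHW; eauto.
  - destruct HW. inversion H; subst. eapply IHW; eauto.
Qed.

Lemma plugW_not_plugD : forall D s W R, Dvalid D -> Wvalid W -> redex R ->
  plugW W R <> plugD D (Lam s).
Proof.
  induction D; intros s W R HDv HW HR E; destruct W; simpl in *.
  - destruct HR as [? [? [? [? [? ->]]]]]. discriminate.
  - discriminate.
  - discriminate.
  - destruct HR as [D' [s' [u' [r' [HD' ->]]]]]. injection E; intros; subst.
    destruct HDv as [HN _]. eapply plugD_not_neutral; eauto.
  - injection E; intros; subst. apply (plugW_not_neutral W R); tauto.
  - destruct HW, HDv. injection E; intros; subst. eapply IHD; eauto.
Qed.

Lemma plugW_unique : forall W W' R R', Wvalid W -> Wvalid W' -> redex R -> redex R' ->
  plugW W R = plugW W' R' -> W = W' /\ R = R'.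
Proof.
  induction W; intros W' R R' HW HW' HR HR' E; destruct W'; simpl in *.
  - auto.
  - exfalso. destruct HR as [D [s [u [r [HD ->]]]]]. injection E; intros; subst.
    eapply plugW_not_plugD; eauto.
  - exfalso. destruct HR as [D [s [u [r [HD ->]]]]]. injection E; intros; subst.
    destruct HW' as [HN _]. eapply plugD_not_neutral; exact HN.
  - exfalso. destruct HR' as [D [s [u [r [HD ->]]]]]. injection E; intros; subst.
    eapply plugW_not_plugD; eauto.
  - injection E; intros; subst. destruct (IHW W' R R') as [-> ->]; auto.
  - exfalso. destruct HW'. injection E; intros; subst.
    eapply plugW_not_neutral; [| |eauto]; eauto.
  - exfalso. destruct HR' as [D [s [u [r [HD ->]]]]]. injection E; intros; subst.
    destruct HW as [HN _]. eapply plugD_not_neutral; exact HN.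
  - exfalso. destruct HW. injection E; intros; subst.
    eapply plugW_not_neutral; [| |eauto]; eauto.
  - destruct HW, HW'. injection E; intros; subst.
    destruct (IHW W' R R') as [-> ->]; auto.
Qed.

Lemma plugD_unique : forall D D' s s', plugD D (Lam s) = plugD D' (Lam s') ->
  D = D' /\ s = s'.
Proof.
  induction D; intros D' s s' E; destruct D'; simpl in *; try discriminate.
  - injection E; auto.
  - injection E; intros. destruct (IHD D' s s') as [-> ->]; subst; auto.
Qed.

Theorem mainTheorem4 : forall t t1 t2 : term,
  wh_step t t1 -> wh_step t t2 -> t1 = t2.
Proof.
  intros t t1 t2 [W [D [s [u [r [HW [HD [E1 E2]]]]]]]]
    [W' [D' [s' [u' [r' [HW' [HD' [E1' E2']]]]]]]].
  subst. destruct (plugW_unique W W' _ _ HW HW' ltac:(exists D, s, u, r; auto)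
    ltac:(exists D', s', u', r'; auto) E1') as [-> E].
  injection E; intros; subst. destruct (plugD_unique _ _ _ _ H1) as [-> ->]. reflexivity.
Qed.
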